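(* Let $E$ be any graph, let $V\subseteq E^0$, and let $H\subseteq E^0$ be a hereditary set such that $\overline{V}\subseteq H\subseteq R(T(V))$. For $v\in H$, let $P_v(T(V))$ be the set of paths of $E$ originating at $v$ and terminating at a vertex of $T(V)$ such that no vertex of the path, except its range, lies in $T(V)$. Then the following are equivalent: (1) $H=\overline{V}$; (2) the set $H\setminus T(V)$ contains no infinite emitters, and every infinite path all of whose vertices lie in $H$ contains a vertex of $T(V)$; (3) the set $P_v(T(V))$ is finite for every $v\in H$.
   Context: A (directed) graph $E=(E^0,E^1,\mathbf{s},\mathbf{r})$ has vertex set $E^0$, edge set $E^1$ (of arbitrary cardinality) and source and range maps $\mathbf{s},\mathbf{r}:E^1\to E^0$. A sink is a vertex emitting no edges, an infinite emitter is a vertex emitting infinitely many edges, and a vertex is regular if it is neither. A path is a single vertex or a finite sequence of edges $e_1\dots e_n$ with $\mathbf{r}(e_i)=\mathbf{s}(e_{i+1})$; an infinite path is an infinite such sequence; $p^0$ denotes the set of vertices on a (finite or infinite) path $p$. Write $u\geq v$ if there is a path from $u$ to $v$. For $V\subseteq E^0$, $T(V)=\{u\in E^0: v\geq u \text{ for some } v\in V\}$ and $R(V)=\{u\in E^0: u\geq v\text{ for some }v\in V\}$. A set $H\subseteq E^0$ is hereditary if $T(H)\subseteq H$, and saturated if every regular vertex $v$ with $\mathbf{r}(\mathbf{s}^{-1}(v))\subseteq H$ lies in $H$. For $V\subseteq E^0$, $\overline{V}$ denotes the smallest hereditary and saturated set containing $V$ (equivalently, the smallest saturated set containing $T(V)$).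 *)

(* Defs.v *)
From Stdlib Require Import List.
Import ListNotations.
Set Implicit Arguments.

Section Graph.
Variables (Vx Ed : Type) (src rng : Ed -> Vx).

Definition sink (v : Vx) : Prop := forall e, src e <> v.

Definition inf_emitter (v : Vx) : Prop :=
  ~ exists l : list Ed, forall e, src e = v -> In e l.

Definition regular (v : Vx) : Prop := ~ sink v /\ ~ inf_emitter v.

(* a finite path is given by its source vertex u and its edge list es;
   es = [] is the vertex path u *)
Fixpoint is_path (u : Vx) (es : list Ed) : Prop :=
  match es with
  | [] => True
  | e :: es' => src e = u /\ is_path (rng e) es'
  end.

Fixpoint path_end (u : Vx) (es : list Ed) : Vx :=
  match es with
  | [] => u
  | e :: es' => path_end (rng e) es'
  end.

Fixpoint path_vertices (u : Vx) (es : list Ed) : list Vx :=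
  match es with
  | [] => [u]
  | e :: es' => u :: path_vertices (rng e) es'
  end.

Definition geq (u v : Vx) : Prop :=
  exists es, is_path u es /\ path_end u es = v.

Definition Tset (S : Vx -> Prop) (u : Vx) : Prop := exists v, S v /\ geq v u.
Definition Rset (S : Vx -> Prop) (u : Vx) : Prop := exists v, S v /\ geq u v.

Definition subset (A B : Vx -> Prop) : Prop := forall x, A x -> B x.
Definition set_eq (A B : Vx -> Prop) : Prop := forall x, A x <-> B x.

Definition hereditary (H : Vx -> Prop) : Prop := subset (Tset H) H.

Definition saturated (H : Vx -> Prop) : Prop :=
  forall v, regular v -> (forall e, src e = v -> H (rng e)) -> H v.

Definition hs_closure (S : Vx -> Prop) (u : Vx) : Prop :=
  forall H, hereditary H -> saturated H -> subset S H -> H u.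

Definition inf_path (f : nat -> Ed) : Prop := forall n, rng (f n) = src (f (S n)).

(* vertices of an infinite path are s(f n), n >= 0 (ranges are also sources) *)
Definition inf_path_in (H : Vx -> Prop) (f : nat -> Ed) : Prop :=
  forall n, H (src (f n)) /\ H (rng (f n)).

Fixpoint avoids_before_end (T : Vx -> Prop) (u : Vx) (es : list Ed) : Prop :=
  match es with
  | [] => True
  | e :: es' => ~ T u /\ avoids_before_end T (rng e) es'
  end.

Definition Pv (T : Vx -> Prop) (v : Vx) (es : list Ed) : Prop :=
  is_path v es /\ T (path_end v es) /\ avoids_before_end T v es.

Definition finite_paths (P : list Ed -> Prop) : Prop :=
  exists l : list (list Ed), forall es, P es -> In es l.

End Graph.

(* Main.v *)
Require Import Defs.
From Stdlib Require Import List.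
From Stdlib Require Import Classical ClassicalEpsilon Lia.
Import ListNotations.
Set Implicit Arguments.

Section Aux.
Variables (Vx Ed : Type) (src rng : Ed -> Vx).

Lemma geq_refl u : geq src rng u u.
Proof. exists []; simpl; auto. Qed.

Lemma geq_trans u v w : geq src rng u v -> geq src rng v w -> geq src rng u w.
Proof.
  intros [es [hp he]]; revert u hp he.
  induction es as [|e es IH]; intros u hp he; simpl in *.
  - subst; auto.
  - destruct hp as [hs hp]. intros g. destruct (IH _ hp he g) as [c [hc hce]].
    exists (e :: c); unfold Pv; simpl; repeat split; auto.
Qed.

Lemma geq_edge e : geq src rng (src e) (rng e).
Proof. exists [e]; simpl; auto. Qed.

Lemma Tset_geq S u w : Tset src rng S u -> geq src rng u w -> Tset src rng S w.
Proof. intros [v [hv g]] g2. exists v; split; auto. eapply geq_trans; eauto. Qed.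

Lemma hered_geq (K : Vx -> Prop) u w : hereditary src rng K -> K u -> geq src rng u w -> K w.
Proof. intros hK hu g. apply hK. exists u; auto. Qed.

Lemma hered_edge (K : Vx -> Prop) e : hereditary src rng K -> K (src e) -> K (rng e).
Proof. intros hK h. eapply hered_geq; eauto. apply geq_edge. Qed.

Inductive Lam (V : Vx -> Prop) : Vx -> Prop :=
| LamT v : Tset src rng V v -> Lam V v
| LamR v : regular src v -> (forall e, src e = v -> Lam V (rng e)) -> Lam V v.

Lemma Lam_edge V e : Lam V (src e) -> Lam V (rng e).
Proof.
  intros h. inversion h as [v hv | v hr hn]; subst.
  - apply LamT. eapply Tset_geq; eauto. apply geq_edge.
  - apply hn; auto.
Qed.

Lemma Lam_geq V u w : Lam V u -> geq src rng u w -> Lam V w.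
Proof.
  intros hl [es [hp he]]; revert u hl hp he.
  induction es as [|e es IH]; intros u hl hp he; simpl in *.
  - subst; auto.
  - destruct hp as [hs hp]. subst u. apply (IH (rng e)); auto. apply Lam_edge; auto.
Qed.

Lemma cl_Lam V : subset (hs_closure src rng V) (Lam V).
Proof.
  intros x hx. apply hx.
  - intros y [u [hu g]]. eapply Lam_geq; eauto.
  - intros v hr h. apply LamR; auto.
  - intros y hy. apply LamT. exists y; split; auto. apply geq_refl.
Qed.

Lemma Lam_path V v : Lam V v -> forall f, inf_path src rng f -> src (f 0) = v ->
  exists n, Tset src rng V (src (f n)).
Proof.
  induction 1 as [v hv | v hr hn IH]; intros f hf h0.
  - exists 0; rewrite h0; auto.
  - destruct (IH (f 0) h0 (fun n => f (S n))) as [n hn'].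
    + intros n; apply hf.
    + simpl. symmetry; apply hf.
    + exists (S n); auto.
Qed.

Lemma fin_T (T : Vx -> Prop) v : T v -> finite_paths (Pv src rng T v).
Proof.
  intros hv. exists [[]]. intros es [_ [_ av]].
  destruct es as [|e es]; [left; reflexivity|].
  simpl in av; destruct av; contradiction.
Qed.

Lemma Lam_fin V v : Lam V v -> finite_paths (Pv src rng (Tset src rng V) v).
Proof.
  induction 1 as [v hv | v hr hn IH].
  - apply fin_T; auto.
  - destruct (classic (Tset src rng V v)) as [hT|hT]; [apply fin_T; auto|].
    destruct hr as [_ hi]. apply NNPP in hi. destruct hi as [l hl].
    assert (exists L, forall e es, In e l -> src e = v ->
              Pv src rng (Tset src rng V) (rng e) es -> In (e :: es) L) as [L hL].
    { clear hl. induction l as [|a l IHl].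
      - exists []; intros e es hin; destruct hin.
      - destruct IHl as [L hL]. destruct (classic (src a = v)) as [ha|ha].
        + destruct (IH a ha) as [La hLa].
          exists (map (cons a) La ++ L). intros e es [<-|hin] hs hp.
          * apply in_or_app; left. apply in_map. auto.
          * apply in_or_app; right; auto.
        + exists L. intros e es [<-|hin] hs hp; [contradiction|auto]. }
    exists L. intros es [hp [ht av]].
    destruct es as [|e es]; simpl in *; [contradiction|].
    destruct hp as [hs hp]; destruct av as [_ av].
    apply hL; auto. split; auto.
Qed.

Lemma first_hit (T : Vx -> Prop) es : forall u, is_path src rng u es ->
  T (path_end rng u es) -> exists c, Pv src rng T u c.
Proof.
  induction es as [|e es IH]; intros u hp ht; simpl in *.
  - exists []; unfold Pv; simpl; repeat split; auto.
  - destruct (classic (T u)) as [hu|hu].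
    + exists []; unfold Pv; simpl; repeat split; auto.
    + destruct hp as [hs hp]. destruct (IH _ hp ht) as [c [hc1 [hc2 hc3]]].
      exists (e :: c); unfold Pv; simpl; repeat split; auto.
Qed.

Lemma reach_hit (T : Vx -> Prop) u : Rset src rng T u -> exists c, Pv src rng T u c.
Proof.
  intros [w [hw [es [hp he]]]]. apply (first_hit T es u hp). rewrite he; auto.
Qed.

Lemma TV_K V K : hereditary src rng K -> subset V K -> subset (Tset src rng V) K.
Proof.
  intros hK hV x [v [hv g]]. eapply hered_geq; eauto.
Qed.

Lemma not_sink (T K : Vx -> Prop) v : subset T K -> Rset src rng T v -> ~ K v -> ~ sink src v.
Proof.
  intros hTK [w [hw [es [hp he]]]] hk hs.
  destruct es as [|e es]; simpl in *.
  - subst; apply hk; auto.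
  - destruct hp as [h _]. apply (hs e h).
Qed.

Lemma out_step (T K H : Vx -> Prop) v : saturated src rng K -> hereditary src rng H ->
  subset T K -> subset H (Rset src rng T) -> H v -> ~ K v -> ~ inf_emitter src v ->
  exists e, src e = v /\ H (rng e) /\ ~ K (rng e).
Proof.
  intros hs hH hTK hHR hv hk hi. apply NNPP; intro hc. apply hk. apply hs.
  - split; auto. exact (not_sink hTK (hHR v hv) hk).
  - intros e he. apply NNPP; intro hn. apply hc. exists e; repeat split; auto.
    apply hered_edge; auto. rewrite he; auto.
Qed.

Lemma max_bound (L : list (list Ed)) : exists m, forall es, In es L -> length es <= m.
Proof.
  induction L as [|a L [m hm]].
  - exists 0; intros es [].
  - exists (max (length a) m). intros es [<-|hin]; [lia|]. specialize (hm _ hin); lia.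
Qed.

End Aux.

Theorem lemma2p1 (Vx Ed : Type) (src rng : Ed -> Vx) (V H : Vx -> Prop)
  (hH : hereditary src rng H)
  (hVH : subset (hs_closure src rng V) H)
  (hHR : subset H (Rset src rng (Tset src rng V))) :
  let TV := Tset src rng V in
  let c1 := set_eq H (hs_closure src rng V) in
  let c2 := (forall v, H v -> ~ TV v -> ~ inf_emitter src v) /\
            (forall f, inf_path src rng f -> inf_path_in src rng H f ->
               exists n, TV (src (f n))) in
  let c3 := forall v, H v -> finite_paths (Pv src rng TV v) in
  (c1 <-> c2) /\ (c1 <-> c3).
Proof.
  intros TV c1 c2 c3.
  assert (c1Lam : c1 -> forall v, H v -> Lam src rng V v).
  { intros h1 v hv. apply cl_Lam. apply h1; auto. }
  split; split.
  - intros h1. split.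
    + intros v hv hT. destruct (c1Lam h1 v hv) as [v' hv'|v' hr _]; [contradiction|].
      apply hr.
    + intros f hf hin. apply (Lam_path (c1Lam h1 _ (proj1 (hin 0)))); auto.
  - intros [h2a h2b] v. split; [|apply hVH]. intros hv K hK hsK hVK.
    pose proof (TV_K hK hVK) as hTK.
    apply NNPP; intro hk.
    assert (step : forall u, H u -> ~ K u -> exists e, src e = u /\ H (rng e) /\ ~ K (rng e)).
    { intros u hu hku. apply (out_step hsK hH hTK hHR hu hku). apply h2a; auto. }
    destruct (step v hv hk) as [e0 [he0 [he0H he0K]]].
    set (next := fun u => epsilon (inhabits e0) (fun e => src e = u /\ H (rng e) /\ ~ K (rng e))).
    assert (hnext : forall u, H u -> ~ K u -> src (next u) = u /\ H (rng (next u)) /\ ~ K (rng (next u))).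
    { intros u hu hku. apply (epsilon_spec (inhabits e0) (fun e => src e = u /\ H (rng e) /\ ~ K (rng e))).
      apply step; auto. }
    set (f := fix f n := match n with 0 => e0 | S n => next (rng (f n)) end).
    assert (inv : forall n, H (src (f n)) /\ ~ K (src (f n)) /\ H (rng (f n)) /\ ~ K (rng (f n))).
    { induction n as [|n [a [b [c d]]]].
      - simpl. rewrite he0. auto.
      - simpl. destruct (hnext _ c d) as [x [y z]]. rewrite x. auto. }
    assert (hf : inf_path src rng f).
    { intros n. simpl. destruct (inv n) as [_ [_ [c d]]]. symmetry; apply hnext; auto. }
    destruct (h2b f hf (fun n => conj (proj1 (inv n)) (proj1 (proj2 (proj2 (inv n)))))) as [n hn].
    apply (proj1 (proj2 (inv n))). apply hTK; auto.
  - intros h1 v hv. apply Lam_fin. apply c1Lam; auto.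
  - intros h3 v. split; [|apply hVH]. intros hv K hK hsK hVK.
    pose proof (TV_K hK hVK) as hTK.
    apply NNPP; intro hk.
    assert (noinf : forall u, H u -> ~ TV u -> ~ inf_emitter src u).
    { intros u hu hT hi. destruct (h3 u hu) as [L hL]. apply hi.
      exists (flat_map (fun es => match es with [] => [] | e :: _ => [e] end) L).
      intros e he. apply in_flat_map.
      assert (hr : H (rng e)) by (apply (@hered_edge _ _ src rng H e hH); rewrite he; auto).
      destruct (reach_hit (hHR _ hr)) as [c [hc1 [hc2 hc3]]].
      exists (e :: c). split; [apply hL|simpl; auto].
      split; [simpl; auto|]. split; simpl; auto. }
    assert (len : forall n u, H u -> ~ K u -> exists es, Pv src rng TV u es /\ n <= length es).
    { induction n as [|n IH]; intros u hu hku.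
      - destruct (reach_hit (hHR _ hu)) as [c hc]. exists c; split; auto; lia.
      - destruct (out_step hsK hH hTK hHR hu hku) as [e [he [hr hkr]]].
        { apply noinf; auto. }
        destruct (IH _ hr hkr) as [es [[p1 [p2 p3]] hl]].
        exists (e :: es). unfold Pv; simpl. split; [|lia].
        split; [split; auto|]. split; [auto|]. split; auto. }
    destruct (h3 v hv) as [L hL]. destruct (max_bound L) as [m hm].
    destruct (len (S m) v hv hk) as [es [hp hl]].
    specialize (hm _ (hL _ hp)). lia.
Qed.
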